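(* Let $h<k\leq d$ be integers with $h\geq 0$, and assume $\dim(S^kV\otimes S^{d-k}V)\leq\dim(S^hV\otimes S^{d-h}V)$. Then the linear map $\eta^{k-h}:S^kV\otimes S^{d-k}V\to S^hV\otimes S^{d-h}V$, $\eta^{k-h}=\sum_{|I|=k-h}\binom{k-h}{I}\partial^I\otimes x^I$, is injective.
   Context: $V\cong\mathbb{C}^{n+1}$ and $S^iV$ is identified with the space of homogeneous polynomials of degree $i$ in $x_0,\dots,x_n$. For a multi-index $I=(i_0,\dots,i_n)$, $|I|=\sum i_j$, $\binom{m}{I}=m!/(i_0!\cdots i_n!)$, $x^I=\prod x_j^{i_j}$, $\partial^I=\prod\partial_{x_j}^{i_j}$. The operator $\partial^I\otimes x^I$ acts on $p\otimes q\in S^kV\otimes S^{d-k}V$ by $p\otimes q\mapsto \partial^I p\otimes x^I q$. *)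

(* Defs.v *)
From HB Require Import structures.
From mathcomp Require Import all_boot all_order all_algebra.
From mathcomp Require Import mpoly.
From mathcomp Require Import complex.
From mathcomp Require Import reals.
Set Implicit Arguments. Unset Strict Implicit. Unset Printing Implicit Defensive.
Import Order.TTheory GRing.Theory Num.Theory.
Local Open Scope ring_scope.

(* Model of S^a V (x) S^b V, V = C^(n+1):  polynomials in 2(n+1) variables
   x_0..x_n (indices lshift) and y_0..y_n (indices rshift), bihomogeneous of
   bidegree (a,b).  p (x) q  corresponds to  p(x) * q(y). *)

Definition nvars (n : nat) := (n.+1 + n.+1)%N.

Definition xmon n (I : 'X_{1..n.+1}) : 'X_{1..nvars n} :=
  [multinom (match split i with inl j => I j | inr _ => 0%N end) | i < nvars n].
Definition ymon n (I : 'X_{1..n.+1}) : 'X_{1..nvars n} :=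
  [multinom (match split i with inl _ => 0%N | inr j => I j end) | i < nvars n].

Definition xdeg n (m : 'X_{1..nvars n}) : nat := (\sum_(j < n.+1) m (lshift n.+1 j))%N.
Definition ydeg n (m : 'X_{1..nvars n}) : nat := (\sum_(j < n.+1) m (rshift n.+1 j))%N.

Definition in_tensor (C : nzRingType) n (a b : nat) (F : {mpoly C[nvars n]}) : bool :=
  all (fun m => (xdeg m == a) && (ydeg m == b)) (msupp F).

Definition multinomial n (e : nat) (I : 'X_{1..n.+1}) : nat :=
  (e`! %/ \prod_(j < n.+1) (I j)`!)%N.

(* eta^e = sum_{|I| = e} binom(e,I) d^I (x) x^I : the operator d_x^I is applied
   to the first tensor factor and multiplication by x^I (here y^I) to the second. *)
Definition eta_op (C : nzRingType) n (e : nat) (F : {mpoly C[nvars n]}) : {mpoly C[nvars n]} :=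
  \sum_(I : 'X_{1..n.+1 < e.+1} | mdeg I == e)
     (multinomial e I)%:R *: ('X_[ymon I] * mderivm (xmon I) F).

(* Main.v *)
From HB Require Import structures.
From mathcomp Require Import all_boot all_order all_algebra.
From mathcomp Require Import mpoly.
From mathcomp Require Import complex.
From mathcomp Require Import reals.
From mathcomp Require Import ring zify.
Require Import Defs.
Import Order.TTheory GRing.Theory Num.Theory ComplexField.

Lemma binS n j : (n + j).+1 * 'C(n + j, n) = j.+1 * 'C(n + j.+1, n).
Proof.
have := mul_bin_down (n + j).+1 n.
by rewrite /= -addnS addKn addnS.
Qed.

Definition fdim n d j := 'C(n + j, n) * 'C(n + (d - j), n).

Lemma fstep n d j : 0 < n -> j.+2 + j <= d -> fdim n d j < fdim n d j.+1.
Proof.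
move=> n0 hj; rewrite /fdim.
set t := d - j.+1.
have ht : d - j = t.+1 by rewrite /t; lia.
rewrite ht.
have hjt : j < t by rewrite /t; lia.
set A := 'C(n + j, n); set X := 'C(n + j.+1, n).
set B := 'C(n + t, n); set Y := 'C(n + t.+1, n).
have e1 := binS n j; have e2 := binS n t; rewrite -/A -/X -/B -/Y in e1 e2.
have A0 : 0 < A by rewrite bin_gt0 leq_addr.
have B0 : 0 < B by rewrite bin_gt0 leq_addr.
rewrite -(ltn_pmul2l (_ : 0 < j.+1 * t.+1)) //.
rewrite [X in X < _]mulnACA -e2 [X in _ < X]mulnACA -e1.
rewrite [X in X < _]mulnACA [X in _ < X]mulnACA ltn_pmul2r ?muln_gt0 ?A0 //; nia.
Qed.

Lemma fchain n d h m : 0 < n -> h < m -> m + m <= d -> fdim n d h < fdim n d m.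
Proof.
move=> n0; elim: m => [//|m IH] hm hd.
have hs := fstep n d m n0.
rewrite ltnS leq_eqVlt in hm; case/orP: hm => [/eqP ->|hm].
  by apply: hs; lia.
apply: ltn_trans (IH hm _) (hs _); lia.
Qed.

Lemma dimlem n h k d : 0 < n -> h < k -> k <= d ->
  'C(n + k, n) * 'C(n + (d - k), n) <= 'C(n + h, n) * 'C(n + (d - h), n) ->
  d <= k + h.
Proof.
move=> n0 hk kd hle; rewrite leqNgt; apply/negP => hlt.
have fk : fdim n d k = fdim n d (minn k (d - k)).
  rewrite /minn; case: ltnP => // _.
  by rewrite /fdim subKn // mulnC.
have := fchain n d h (minn k (d - k)) n0.
rewrite -fk /fdim => H.
have : 'C(n + h, n) * 'C(n + (d - h), n) < 'C(n + k, n) * 'C(n + (d - k), n).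
  by apply: H; lia.
by rewrite ltnNge hle.
Qed.

Set Implicit Arguments. Unset Strict Implicit. Unset Printing Implicit Defensive.
Local Open Scope ring_scope.

Definition Lop (C : numFieldType) (N k : nat) (p q : 'I_k -> 'I_N)
  (F : {mpoly C[N]}) : {mpoly C[N]} :=
  \sum_(i < k) 'X_(p i) * mderiv (q i) F.

Lemma Lop_is_linear (C : numFieldType) (N k : nat) (p q : 'I_k -> 'I_N) :
  linear (@Lop C N k p q).
Proof.
move=> c F G; rewrite /Lop scaler_sumr -big_split /=; apply: eq_bigr => i _.
by rewrite mderivD mderivZ mulrDr scalerAr.
Qed.

HB.instance Definition _ (C : numFieldType) (N k : nat) (p q : 'I_k -> 'I_N) :=
  GRing.isLinear.Build C {mpoly C[N]} {mpoly C[N]} _ (@Lop C N k p q)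
    (Lop_is_linear p q).

Lemma mderiv_XM (C : numFieldType) (N : nat) (a b : 'I_N) (G : {mpoly C[N]}) :
  mderiv a ('X_b * G) = (b == a)%:R *: G + 'X_b * mderiv a G.
Proof.
rewrite mderivM mderivX mnm1E; congr (_ + _).
case: eqP => [->|_]; last by rewrite scale0r mul0r scale0r.
have -> : (U_(a) - U_(a))%MM = 0%MM by apply/mnmP=> l; rewrite !mnmE subnn.
by rewrite mpolyX0 scale1r mul1r scale1r.
Qed.

Lemma mderiv_sum (C : numFieldType) (N k : nat) (a : 'I_N) (G : 'I_k -> {mpoly C[N]}) :
  mderiv a (\sum_(j < k) G j) = \sum_(j < k) mderiv a (G j).
Proof. by rewrite raddf_sum. Qed.

Lemma Lop_comm (C : numFieldType) (N k : nat) (p q r s : 'I_k -> 'I_N)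
  (F : {mpoly C[N]}) :
  Lop p q (Lop r s F) - Lop r s (Lop p q F) =
  \sum_(i < k) \sum_(j < k) ((r j == q i)%:R *: ('X_(p i) * mderiv (s j) F)
     - (p i == s j)%:R *: ('X_(r j) * mderiv (q i) F)).
Proof.
rewrite /Lop.
have E1 : \sum_(i < k) 'X_(p i) * mderiv (q i) (\sum_(j < k) 'X_(r j) * mderiv (s j) F)
  = \sum_(i < k) \sum_(j < k) ((r j == q i)%:R *: ('X_(p i) * mderiv (s j) F)
      + 'X_(p i) * ('X_(r j) * mderiv (q i) (mderiv (s j) F))).
  apply: eq_bigr => i _; rewrite mderiv_sum mulr_sumr; apply: eq_bigr => j _.
  by rewrite mderiv_XM mulrDr scalerAr.
have E2 : \sum_(j < k) 'X_(r j) * mderiv (s j) (\sum_(i < k) 'X_(p i) * mderiv (q i) F)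
  = \sum_(i < k) \sum_(j < k) ((p i == s j)%:R *: ('X_(r j) * mderiv (q i) F)
      + 'X_(p i) * ('X_(r j) * mderiv (q i) (mderiv (s j) F))).
  rewrite exchange_big /=.
  apply: eq_bigr => j _; rewrite mderiv_sum mulr_sumr; apply: eq_bigr => i _.
  by rewrite mderiv_XM mulrDr scalerAr mulrCA mderiv_comm.
rewrite E1 E2 -sumrB; apply: eq_bigr => i _; rewrite -sumrB; apply: eq_bigr => j _.
by rewrite opprD addrACA subrr addr0.
Qed.


Definition lx n (j : 'I_n.+1) : 'I_(nvars n) := lshift n.+1 j.
Definition ry n (j : 'I_n.+1) : 'I_(nvars n) := rshift n.+1 j.

Definition Eop (C : numFieldType) n := @Lop C (nvars n) n.+1 (@ry n) (@lx n).
Definition Xop (C : numFieldType) n := @Lop C (nvars n) n.+1 (@lx n) (@ry n).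
Definition EXop (C : numFieldType) n := @Lop C (nvars n) n.+1 (@lx n) (@lx n).
Definition EYop (C : numFieldType) n := @Lop C (nvars n) n.+1 (@ry n) (@ry n).

Lemma sum_delta_l (C : numFieldType) N k (i : 'I_k) (A : 'I_k -> {mpoly C[N]}) :
  \sum_(j < k) (j == i)%:R *: A j = A i.
Proof.
rewrite (bigD1 i) //= eqxx scale1r big1 ?addr0 // => j /negbTE ->.
by rewrite scale0r.
Qed.

Lemma sum_delta_r (C : numFieldType) N k (i : 'I_k) (A : 'I_k -> {mpoly C[N]}) :
  \sum_(j < k) (i == j)%:R *: A j = A i.
Proof. by under eq_bigr => j _ do rewrite eq_sym; exact: sum_delta_l. Qed.

Lemma eqlx n i j : (@lx n i == @lx n j) = (i == j).
Proof. exact: eq_lshift. Qed.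
Lemma eqry n i j : (@ry n i == @ry n j) = (i == j).
Proof. exact: eq_rshift. Qed.
Lemma eqlxry n i j : (@lx n i == @ry n j) = false.
Proof. exact: eq_lrshift. Qed.
Lemma eqrylx n i j : (@ry n i == @lx n j) = false.
Proof. exact: eq_rlshift. Qed.

Lemma sdl (C : numFieldType) N k (f : 'I_k -> 'I_N) (fi : injective f) (i : 'I_k)
  (A : 'I_k -> {mpoly C[N]}) : \sum_(j < k) (f j == f i)%:R *: A j = A i.
Proof. by under eq_bigr => j _ do rewrite (inj_eq fi); exact: sum_delta_l. Qed.
Lemma sdr (C : numFieldType) N k (f : 'I_k -> 'I_N) (fi : injective f) (i : 'I_k)
  (A : 'I_k -> {mpoly C[N]}) : \sum_(j < k) (f i == f j)%:R *: A j = A i.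
Proof. by under eq_bigr => j _ do rewrite (inj_eq fi); exact: sum_delta_r. Qed.
Lemma sz (C : numFieldType) N k (b : 'I_k -> bool) (hb : forall j, b j = false)
  (A : 'I_k -> {mpoly C[N]}) : \sum_(j < k) (b j)%:R *: A j = 0.
Proof. by rewrite big1 // => j _; rewrite hb scale0r. Qed.
Lemma lx_inj n : injective (@lx n). Proof. exact: lshift_inj. Qed.
Lemma ry_inj n : injective (@ry n). Proof. exact: rshift_inj. Qed.

Lemma K1 (C : numFieldType) n (F : {mpoly C[nvars n]}) :
  Xop (Eop F) - Eop (Xop F) = EXop F - EYop F.
Proof.
rewrite /Xop /Eop Lop_comm.
under eq_bigr => i _ do rewrite sumrB (sdl (@ry_inj n)) (sdr (@lx_inj n)).
by rewrite sumrB /EXop /EYop /Lop.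
Qed.

Lemma K2a (C : numFieldType) n (F : {mpoly C[nvars n]}) :
  EXop (Eop F) - Eop (EXop F) = - Eop F.
Proof.
rewrite /EXop /Eop Lop_comm -sumrN.
apply: eq_bigr => i _; rewrite sumrB (sdr (@lx_inj n)).
by rewrite sz ?add0r // => j; rewrite eqrylx.
Qed.

Lemma K2b (C : numFieldType) n (F : {mpoly C[nvars n]}) :
  EYop (Eop F) - Eop (EYop F) = Eop F.
Proof.
rewrite /EYop /Eop Lop_comm.
apply: eq_bigr => i _; rewrite sumrB (sdl (@ry_inj n)).
by rewrite sz ?subr0 // => j; rewrite eqrylx.
Qed.

Lemma K3a (C : numFieldType) n (F : {mpoly C[nvars n]}) :
  EXop (Xop F) - Xop (EXop F) = Xop F.
Proof.
rewrite /EXop /Xop Lop_comm.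
apply: eq_bigr => i _; rewrite sumrB (sdl (@lx_inj n)).
by rewrite sz ?subr0 // => j; rewrite eqlxry.
Qed.

Lemma K3b (C : numFieldType) n (F : {mpoly C[nvars n]}) :
  EYop (Xop F) - Xop (EYop F) = - Xop F.
Proof.
rewrite /EYop /Xop Lop_comm -sumrN.
apply: eq_bigr => i _; rewrite sumrB (sdr (@ry_inj n)).
by rewrite sz ?add0r // => j; rewrite eqlxry.
Qed.


Lemma Lop_mon (C : numFieldType) N k (p : 'I_k -> 'I_N) (u : 'X_{1..N}) :
  Lop p p ('X_[u] : {mpoly C[N]}) = (\sum_(i < k) u (p i))%:R *: 'X_[u].
Proof.
rewrite /Lop natr_sum scaler_suml; apply: eq_bigr => i _.
rewrite mderivX -scalerAr -mpolyXD.
have [->|nz] := eqVneq (u (p i)) 0%N; first by rewrite !scale0r.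
by rewrite addmC submK // lep1mP.
Qed.

Lemma LopZ (C : numFieldType) N k (p q : 'I_k -> 'I_N) c (v : {mpoly C[N]}) :
  Lop p q (c *: v) = c *: Lop p q v.
Proof. exact: linearZ. Qed.
Lemma Lop_sum (C : numFieldType) N k (p q : 'I_k -> 'I_N) (r : seq 'X_{1..N}) (G : 'X_{1..N} -> {mpoly C[N]}) :
  Lop p q (\sum_(u <- r) G u) = \sum_(u <- r) Lop p q (G u).
Proof. exact: linear_sum. Qed.

Lemma Lop_coef (C : numFieldType) N k (p : 'I_k -> 'I_N) (v : {mpoly C[N]}) m :
  (Lop p p v)@_m = (\sum_(i < k) m (p i))%:R * v@_m.
Proof.
rewrite {1}(mpolyE v) Lop_sum raddf_sum /=.
under eq_bigr => u _ do rewrite LopZ Lop_mon scalerA mcoeffZ mcoeffX.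
case: (boolP (m \in msupp v)) => hm.
  rewrite (bigD1_seq m hm (msupp_uniq v)) /= eqxx mulr1 [X in _ + X]big1 ?addr0.
    by rewrite mulrC.
  by move=> u /negbTE ->; rewrite mulr0.
rewrite (memN_msupp_eq0 hm) mulr0 big_seq big1 // => u hu.
case: eqP => [e|]; last by rewrite mulr0.
by move: hm; rewrite -e hu.
Qed.

Lemma EX_coef (C : numFieldType) n (v : {mpoly C[nvars n]}) m :
  (EXop v)@_m = (xdeg m)%:R * v@_m.
Proof. exact: Lop_coef. Qed.

Lemma EY_coef (C : numFieldType) n (v : {mpoly C[nvars n]}) m :
  (EYop v)@_m = (ydeg m)%:R * v@_m.
Proof. exact: Lop_coef. Qed.

Lemma K5 (C : numFieldType) n a b (F : {mpoly C[nvars n]}) :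
  in_tensor a b F -> EXop F = a%:R *: F /\ EYop F = b%:R *: F.
Proof.
move=> /allP H; split; apply/mpolyP => m; rewrite ?EX_coef ?EY_coef mcoeffZ;
  (case: (boolP (m \in msupp F)) => hm; last by rewrite (memN_msupp_eq0 hm) !mulr0);
  by case/andP: (H m hm) => /eqP hx /eqP hy; rewrite ?hx ?hy.
Qed.

Lemma K6 (C : numFieldType) n (w : {mpoly C[nvars n]}) :
  EYop w = - w -> w = 0.
Proof.
move=> H; apply/mpolyP => m; have := congr1 (mcoeff m) H.
rewrite EY_coef mcoeffN mcoeff0 => h.
have : ((ydeg m).+1)%:R * w@_m = 0 by rewrite -addn1 natrD mulrDl mul1r h addNr.
by move/eqP; rewrite mulf_eq0 pnatr_eq0 /= => /eqP.
Qed.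


Section W.
Context (C : numFieldType) (n : nat).
Local Notation P := {mpoly C[nvars n]}.
Local Notation E := (@Eop C n).
Local Notation X := (@Xop C n).

Lemma EopD (u v : P) : E (u + v) = E u + E v. Proof. exact: linearD. Qed.
Lemma EopZ c (u : P) : E (c *: u) = c *: E u. Proof. exact: linearZ. Qed.
Lemma Eop0 : E 0 = 0. Proof. exact: linear0. Qed.
Lemma Xop0 : X 0 = 0. Proof. exact: linear0. Qed.
Lemma XopD (u v : P) : X (u + v) = X u + X v. Proof. exact: linearD. Qed.
Lemma XopZ c (u : P) : X (c *: u) = c *: X u. Proof. exact: linearZ. Qed.

Lemma iterE0 j : iter j E 0 = 0.
Proof. by elim: j => //= j ->; rewrite Eop0. Qed.
Lemma iterED j (u v : P) : iter j E (u + v) = iter j E u + iter j E v.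
Proof. by elim: j => //= j ->; rewrite EopD. Qed.
Lemma iterEZ j c (u : P) : iter j E (c *: u) = c *: iter j E u.
Proof. by elim: j => //= j ->; rewrite EopZ. Qed.

Definition Wt (a b : C) (v : P) := EXop v = a *: v /\ EYop v = b *: v.

Lemma WtE a b v : Wt a b v -> Wt (a - 1) (b + 1) (E v).
Proof.
case=> hx hy; split.
  by move/eqP: (K2a v); rewrite subr_eq hx EopZ => /eqP ->; rewrite scalerBl scale1r addrC.
by move/eqP: (K2b v); rewrite subr_eq hy EopZ => /eqP ->; rewrite scalerDl scale1r addrC.
Qed.

Lemma WtX a b v : Wt a b v -> Wt (a + 1) (b - 1) (X v).
Proof.
case=> hx hy; split.
  by move/eqP: (K3a v); rewrite subr_eq hx XopZ => /eqP ->; rewrite scalerDl scale1r addrC.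
by move/eqP: (K3b v); rewrite subr_eq hy XopZ => /eqP ->; rewrite scalerBl scale1r addrC.
Qed.

Lemma Wt_iter a b v j : Wt a b v -> Wt (a - j%:R) (b + j%:R) (iter j E v).
Proof.
move=> h; elim: j => [|j IH] /=; first by rewrite !subr0 !addr0.
have := WtE IH; rewrite -addn1 natrD opprD addrA addrA.
by [].
Qed.

Lemma Gid a b v : Wt a b v -> forall j,
  X (iter j.+1 E v) = iter j.+1 E (X v) + ((j.+1)%:R * (a - b - j%:R)) *: iter j E v.
Proof.
move=> hW j; elim: j => [|j IH].
  have := K1 v; move/eqP; rewrite subr_eq => /eqP /= ->.
  by case: hW => -> ->; rewrite -scalerBl mul1r subr0 addrC.
have := K1 (iter j.+1 E v); move/eqP; rewrite subr_eq => /eqP.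
rewrite [iter j.+2 E v]/= => ->.
case: (Wt_iter j.+1 hW) => -> ->.
rewrite IH EopD EopZ /=. set w := E (iter j E v). set z := E (E _).
rewrite -scalerBl addrCA -scalerDl; congr (_ + _ *: _).
rewrite -[j.+2]addn1 -[j.+1]addn1 !natrD; ring.
Qed.
Lemma core_step an bn e v : (bn + e.+1 <= an)%N -> Wt an%:R bn%:R v ->
  iter e.+1 E v = 0 -> (iter e.+2 E (X v) = 0 -> X v = 0) -> iter e E v = 0.
Proof.
move=> hle hW hit hX.
have G := Gid hW e; rewrite hit Xop0 in G.
have hit' : E (iter e E v) = 0 := hit.
have h2 : iter e.+2 E (X v) = 0.
  have := congr1 E G; rewrite Eop0 EopD EopZ hit' scaler0 addr0.
  by move=> /esym.
rewrite (hX h2) iterE0 add0r in G.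
move/esym/eqP: G; rewrite scaler_eq0 => /orP [|/eqP //].
rewrite mulf_eq0 => /orP [|]; first by rewrite pnatr_eq0.
rewrite -natrB; last by lia.
rewrite -natrB; last by lia.
rewrite pnatr_eq0 => /eqP; lia.
Qed.

Lemma core_gen an bn
  (hX : forall e v, (bn + e.+1 <= an)%N -> Wt an%:R bn%:R v ->
      iter e.+2 E (X v) = 0 -> X v = 0) e v :
  (bn + e <= an)%N -> Wt an%:R bn%:R v -> iter e E v = 0 -> v = 0.
Proof.
elim: e v => [|e IH] v hle hW hit; first exact: hit.
eapply IH; [lia|exact hW|].
exact: core_step hle hW hit (hX e v hle hW).
Qed.

Lemma core bn : forall an e v, (bn + e <= an)%N -> Wt an%:R bn%:R v ->
  iter e E v = 0 -> v = 0.
Proof.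
elim: bn => [|b IHb] an; apply: core_gen => e v hle hW hit.
  case: hW => _ hy; rewrite scale0r in hy.
  apply: K6; have := K3b v; rewrite hy Xop0 subr0 //.
apply: (IHb an.+1 e.+2 (X v)) => //; first lia.
have -> : (an.+1)%:R = an%:R + 1 :> C by rewrite -addn1 natrD.
have -> : b%:R = b.+1%:R - 1 :> C by rewrite -addn1 natrD addrK.
exact: WtX.
Qed.
End W.


Lemma mpolyXi_neq0 (C : numFieldType) N (i : 'I_N) : ('X_i : {mpoly C[N]}) != 0.
Proof.
apply/eqP => h; have := congr1 (mcoeff U_(i)) h.
by rewrite mcoeffX eqxx mcoeff0 => /eqP; rewrite oner_eq0.
Qed.

Lemma n0core (C : numFieldType) (e : nat) : forall (a : nat) (v : {mpoly C[nvars 0]}),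
  (e <= a)%N -> EXop v = a%:R *: v -> iter e (@Eop C 0) v = 0 -> v = 0.
Proof.
elim: e => [|e IH] a v hle hx hit; first exact: hit.
have hEx : EXop (Eop v) = (a.-1)%:R *: Eop v.
  move/eqP: (K2a v); rewrite subr_eq hx EopZ => /eqP ->.
  rewrite -subn1 natrB; last by lia.
  by rewrite scalerBl scale1r addrC.
rewrite iterSr in hit.
have hE0 := IH a.-1 (Eop v) ltac:(lia) hEx hit.
move: hE0; rewrite /Eop /Lop big_ord1 => /eqP; rewrite mulf_eq0 (negbTE (mpolyXi_neq0 _ _)) /=.
move=> /eqP hd.
move: hx; rewrite /EXop /Lop big_ord1 hd mulr0 => /esym/eqP.
rewrite scaler_eq0 pnatr_eq0 => /orP [/eqP|/eqP //]; lia.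
Qed.


Lemma prod_fact_dvd m (f : 'I_m -> nat) :
  (\prod_(i < m) (f i)`! %| (\sum_(i < m) f i)`!)%N.
Proof.
elim: m f => [|m IH] f; first by rewrite !big_ord0.
rewrite !big_ord_recr /=.
set a := (\sum_(i < m) f (widen_ord _ i))%N; set b := f ord_max.
have := bin_fact (leq_addr b a); rewrite addKn => <-.
by apply: dvdn_mull; apply: dvdn_mul (IH _) (dvdnn _).
Qed.

Lemma mult_fact n e (I : 'X_{1..n.+1}) :
  mdeg I = e -> (multinomial e I * \prod_(i < n.+1) (I i)`!)%N = e`!.
Proof. by move=> H; rewrite /multinomial divnK // -H mdegE prod_fact_dvd. Qed.

Lemma mdeg_subU n (J : 'X_{1..n}) j : J j != 0%N -> mdeg (J - U_(j))%MM = (mdeg J).-1.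
Proof.
move=> h; have := submK (m := U_(j)) (m' := J); rewrite lep1mP h => /(_ isT) e.
by rewrite -{2}e mdegD mdeg1 addn1.
Qed.

Lemma N2 n (J : 'X_{1..n.+1}) j : J j != 0%N ->
  (\prod_(i < n.+1) ((J - U_(j))%MM i)`! * J j)%N = (\prod_(i < n.+1) (J i)`!)%N.
Proof.
move=> h; rewrite (bigD1 j) // [in RHS](bigD1 j) //= mnmBE mnm1E eqxx.
rewrite (eq_bigr (fun i => (J i)`!)); last first.
  by move=> i hij; rewrite mnmBE mnm1E eq_sym (negbTE hij) subn0.
case: (J j) h => // s _; rewrite subn1 /= factS; lia.
Qed.

Lemma coef_id n e (J : 'X_{1..n.+1}) : mdeg J = e.+1 ->
  (\sum_(j < n.+1) (J j != 0%N) * multinomial e (J - U_(j)))%N = multinomial e.+1 J.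
Proof.
move=> hJ; apply/eqP.
rewrite -(eqn_pmul2r (prodn_gt0 (r := index_enum 'I_n.+1) (P := xpredT) (fun i => fact_gt0 (J i)))).
rewrite mult_fact // big_distrl /=.
rewrite (eq_bigr (fun j => e`! * J j)%N); last first.
  move=> j _; case: (boolP (J j != 0%N)) => h; last by move: h; rewrite negbK => /eqP ->; rewrite muln0.
  by rewrite mul1n -(N2 h) mulnA mult_fact // mdeg_subU // hJ.
by rewrite -big_distrr /= -mdegE hJ factS mulnC.
Qed.

Lemma split_lx n (j : 'I_n.+1) : split (@lx n j) = inl j.
Proof. exact: (unsplitK (inl _)). Qed.
Lemma split_ry n (j : 'I_n.+1) : split (@ry n j) = inr j.
Proof. exact: (unsplitK (inr _)). Qed.

Lemma ymon_lx n (I : 'X_{1..n.+1}) j : ymon I (@lx n j) = 0%N.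
Proof. by rewrite /ymon mnmE split_lx. Qed.

Lemma xmonD n (I J : 'X_{1..n.+1}) : xmon (I + J)%MM = (xmon I + xmon J)%MM.
Proof. by apply/mnmP => i; rewrite mnmDE !mnmE; case: split => // a; rewrite mnmDE. Qed.
Lemma ymonD n (I J : 'X_{1..n.+1}) : ymon (I + J)%MM = (ymon I + ymon J)%MM.
Proof. by apply/mnmP => i; rewrite mnmDE !mnmE; case: split => // a; rewrite mnmDE. Qed.

Lemma xmonU n (j : 'I_n.+1) : xmon U_(j)%MM = U_(@lx n j)%MM.
Proof.
apply/mnmP => i; rewrite -(splitK i); case: (split i) => a;
  rewrite mnmE unsplitK mnm1E /=.
  by rewrite mnm1E /lx eq_lshift.
by rewrite /lx eq_lrshift.
Qed.
Lemma ymonU n (j : 'I_n.+1) : ymon U_(j)%MM = U_(@ry n j)%MM.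
Proof.
apply/mnmP => i; rewrite -(splitK i); case: (split i) => a;
  rewrite mnmE unsplitK mnm1E /=.
  by rewrite /ry eq_rlshift.
by rewrite mnm1E /ry eq_rshift.
Qed.
Lemma xmon0 n : @xmon n 0%MM = 0%MM.
Proof. by apply/mnmP => i; rewrite !mnmE; case: split => a; rewrite ?mnmE. Qed.
Lemma ymon0 n : @ymon n 0%MM = 0%MM.
Proof. by apply/mnmP => i; rewrite !mnmE; case: split => a; rewrite ?mnmE. Qed.

Definition Aop (C : numFieldType) n (F : {mpoly C[nvars n]}) (J : 'X_{1..n.+1}) :
  {mpoly C[nvars n]} := 'X_[ymon J] * mderivm (xmon J) F.

Lemma E_A (C : numFieldType) n (F : {mpoly C[nvars n]}) J :
  Eop (Aop F J) = \sum_(j < n.+1) Aop F (J + U_(j))%MM.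
Proof.
rewrite /Eop /Lop; apply: eq_bigr => j _; rewrite /Aop.
rewrite mderivM mderivX ymon_lx scale0r mul0r add0r.
rewrite mulrA -mpolyXD ymonD ymonU addmC; congr (_ * _).
by rewrite xmonD xmonU mderivmDm mderivmU1m.
Qed.

Definition hsub n e (j : 'I_n.+1) (J : 'X_{1..n.+1 < e.+2}) : 'X_{1..n.+1 < e.+1} :=
  insubd bm0 (J - U_(j))%MM.
Lemma hadd_proof n e (j : 'I_n.+1) (I : 'X_{1..n.+1 < e.+1}) : (mdeg (I + U_(j))%MM < e.+2)%N.
Proof. by rewrite mdegD mdeg1 addn1 ltnS bmdeg. Qed.
Definition hadd n e j (I : 'X_{1..n.+1 < e.+1}) : 'X_{1..n.+1 < e.+2} :=
  BMultinom (hadd_proof j I).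

Lemma reidx (V : zmodType) n e (j : 'I_n.+1) (G : 'X_{1..n.+1} -> V) :
  \sum_(I : 'X_{1..n.+1 < e.+1} | mdeg I == e) G (I + U_(j))%MM =
  \sum_(J : 'X_{1..n.+1 < e.+2} | (mdeg J == e.+1) && (J j != 0%N)) G J.
Proof.
rewrite (reindex_onto (@hsub n e j) (@hadd n e j)) /=; last first.
  move=> I _; apply/val_inj; rewrite /hsub /= addmK insubdK //.
  exact: bmdeg.
apply: eq_big => J; last by move=> /andP [_ /eqP h]; congr G; exact: (congr1 val h).
apply/andP/andP => [[/eqP h1 /eqP h2]|[/eqP h1 h2]].
  have hv : ((hsub j J : 'X_{1..n.+1}) + U_(j))%MM = J := congr1 val h2.
  split; first by rewrite -hv mdegD mdeg1 h1 addn1.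
  by rewrite -hv mnmDE mnm1E eqxx addn1.
have hv : (hsub j J : 'X_{1..n.+1}) = (J - U_(j))%MM.
  by rewrite /hsub insubdK // unfold_in /= mdeg_subU // h1.
split; first by rewrite hv mdeg_subU // h1.
by apply/eqP/val_inj; rewrite /= hv submK // lep1mP.
Qed.

Lemma eta_opE (C : numFieldType) n e (F : {mpoly C[nvars n]}) :
  eta_op e F = \sum_(I : 'X_{1..n.+1 < e.+1} | mdeg I == e) (multinomial e I)%:R *: Aop F I.
Proof. by []. Qed.

Lemma Eop_sumb (C : numFieldType) n (T : finType) (P : pred T) (G : T -> {mpoly C[nvars n]}) :
  Eop (\sum_(t | P t) G t) = \sum_(t | P t) Eop (G t).
Proof. exact: linear_sum. Qed.

Lemma eta_rec (C : numFieldType) n e (F : {mpoly C[nvars n]}) :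
  eta_op e.+1 F = Eop (eta_op e F).
Proof.
rewrite !eta_opE Eop_sumb.
under [RHS]eq_bigr => I _ do rewrite EopZ E_A scaler_sumr.
rewrite exchange_big /=.
under [RHS]eq_bigr => j _.
  under eq_bigr => I _ do rewrite -[in X in (multinomial e X)](addmK U_(j)%MM I).
  rewrite (@reidx _ n e j (fun J => (multinomial e (J - U_(j))%MM)%:R *: Aop F J)).
  rewrite big_mkcondr /=.
  over.
rewrite /= exchange_big /=; apply: eq_bigr => J /eqP hJ.
rewrite -(coef_id hJ) natr_sum scaler_suml; apply: eq_bigr => j _.
by case: (J j != 0%N); rewrite ?mul1n ?mul0n ?scale0r.
Qed.

Lemma eta_iter (C : numFieldType) n e (F : {mpoly C[nvars n]}) :
  eta_op e F = iter e (@Eop C n) F.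
Proof.
elim: e => [|e IH]; last by rewrite eta_rec IH.
rewrite eta_opE (big_pred1 bm0); last first.
  by move=> I; rewrite /= mdeg_eq0 bmeqP.
rewrite /Aop /= xmon0 ymon0 mpolyX0 mul1r mderivm0m /multinomial.
rewrite big1 ?divnn //= ?scale1r // => i _; by rewrite mnm0E.
Qed.


Lemma iterEB (C : numFieldType) n j (u v : {mpoly C[nvars n]}) :
  iter j (@Eop C n) (u - v) = iter j (@Eop C n) u - iter j (@Eop C n) v.
Proof. by rewrite -scaleN1r iterED iterEZ scaleN1r. Qed.
Lemma EXopB (C : numFieldType) n (u v : {mpoly C[nvars n]}) : EXop (u - v) = EXop u - EXop v.
Proof. exact: raddfB. Qed.
Lemma EYopB (C : numFieldType) n (u v : {mpoly C[nvars n]}) : EYop (u - v) = EYop u - EYop v.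
Proof. exact: raddfB. Qed.

Theorem proposition5p1 (R : realType) (n h k d : nat) :
  (h < k)%N -> (k <= d)%N ->
  ('C(n + k, n) * 'C(n + (d - k), n) <= 'C(n + h, n) * 'C(n + (d - h), n))%N ->
  {in [pred F : {mpoly R[i][nvars n]} | in_tensor k (d - k)%N F] &,
     injective (@eta_op R[i] n (k - h)%N)}.
Proof.
move=> hk kd hdim F G; rewrite !inE => hF hG heq.
apply/eqP; rewrite -subr_eq0; apply/eqP.
have hit : iter (k - h) (@Eop R[i] n) (F - G) = 0.
  by rewrite iterEB -!eta_iter heq subrr.
have [hxF hyF] := K5 hF; have [hxG hyG] := K5 hG.
have hx : EXop (F - G) = k%:R *: (F - G) by rewrite EXopB hxF hxG scalerBr.
have hy : EYop (F - G) = (d - k)%:R *: (F - G) by rewrite EYopB hyF hyG scalerBr.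
move: (F - G) hit hx hy => v hit hx hy; clear hF hG heq hxF hyF hxG hyG F G.
move: v hit hx hy hdim; case: n => [|n'] v hit hx hy hdim.
  exact: (n0core (leq_subr h k) hx hit).
have hdk := dimlem _ _ _ _ (ltn0Sn n') hk kd hdim.
clear hdim.
apply: (core (bn := (d - k)%N) (an := k) (e := (k - h)%N)); [lia | by split | exact: hit].
Qed.
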